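(* Let ${\mathsf P}$ be a finite point process on a Polish space $X$, let ${\mathbf T}$ be a thinning kernel, let ${\mathsf P}'$ be the thinning of ${\mathsf P}$, and let ${\mathbf Q}$ be a condensation kernel of ${\mathsf P}$ with respect to ${\mathbf T}$. Then for every measurable $g:\mathcal M_f(X)^4\to[0,\infty)$, $$\int g(\kappa,\mu,\lambda,\nu)\,{\mathbf T}_\nu(\{\kappa\})\,{\mathbf Q}_\lambda(\mathrm d\nu)\,{\mathbf T}_\mu(\mathrm d\lambda)\,{\mathbf Q}_\kappa(\mathrm d\mu)\,{\mathsf P}'(\mathrm d\kappa)$$ $$=\int g(\kappa,\mu,\lambda,\nu)\,{\mathbf T}_\mu(\{\kappa\})\,{\mathbf Q}_\lambda(\mathrm d\mu)\,{\mathbf T}_\nu(\mathrm d\lambda)\,{\mathbf Q}_\kappa(\mathrm d\nu)\,{\mathsf P}'(\mathrm d\kappa).$$ In other words, for ${\mathsf P}'$-a.e. $\kappa$, $${\mathbf T}_\nu(\{\kappa\})\,{\mathbf Q}_\lambda(\mathrm d\nu)\,{\mathbf T}_\mu(\mathrm d\lambda)\,{\mathbf Q}_\kappa(\mathrm d\mu)={\mathbf T}_\mu(\{\kappa\})\,{\mathbf Q}_\lambda(\mathrm d\mu)\,{\mathbf T}_\nu(\mathrm d\lambda)\,{\mathbf Q}_\kappa(\mathrm d\nu).$$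
   Context: $\mathcal M_f(X)$ denotes the set of finite counting measures on $X$, with the $\sigma$-algebra generated by $\mu\mapsto\mu(B)$. A finite point process is a probability measure on $\mathcal M_f(X)$. A thinning kernel is a stochastic kernel $\mu\mapsto{\mathbf T}_\mu$ from $\mathcal M_f(X)$ to $\mathcal M_f(X)$ with ${\mathbf T}_\mu$ concentrated on $\{\eta:\eta\le\mu\}$. The thinning of ${\mathsf P}$ is ${\mathsf P}'=\int{\mathbf T}_\mu\,{\mathsf P}(\mathrm d\mu)$. A condensation kernel is a stochastic kernel $\eta\mapsto{\mathbf Q}_\eta$ concentrated on $\{\mu:\mu\ge\eta\}$ such that $$\iint g(\eta,\mu)\,{\mathbf T}_\mu(\mathrm d\eta)\,{\mathsf P}(\mathrm d\mu)=\iint g(\eta,\mu)\,{\mathbf Q}_\eta(\mathrm d\mu)\,{\mathsf P}'(\mathrm d\eta)$$ for all non-negative measurable $g$. *)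

(* Defs.v *)
From HB Require Import structures.
From mathcomp Require Import all_boot all_order all_algebra finmap.
From mathcomp Require Import all_classical all_reals all_analysis measurable_realfun.
Set Implicit Arguments. Unset Strict Implicit. Unset Printing Implicit Defensive.
Import Order.TTheory GRing.Theory Num.Theory.
Local Open Scope classical_set_scope.
Local Open Scope ring_scope.

Definition polish (R : realType) (X : topologicalType) : Prop :=
  (exists D : set X, countable D /\ closure D = [set: X]) /\
  exists d : X -> X -> R,
    (forall x y, 0 <= d x y) /\
    (forall x y, d x y = 0 <-> x = y) /\
    (forall x y, d x y = d y x) /\
    (forall x y z, d x z <= d x y + d y z) /\
    (forall A : set X, open A <->
       (forall x, A x -> exists2 e : R, 0 < e & [set y | d x y < e] `<=` A)) /\
    (forall u : nat -> X,
           (forall e : R, 0 < e -> exists N : nat, forall m n : nat,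
              (N <= m)%N -> (N <= n)%N -> d (u m) (u n) < e) ->
           exists l : X, u @ \oo --> l).

Definition borel_set (X : topologicalType) (B : set X) : Prop :=
  <<s [set A : set X | open A] >> B.

(* A finite counting measure on X is a finite sum of Dirac masses; it is
   represented by its finitely supported multiplicity function x |-> mu {x}. *)
Definition cmeas (X : choiceType) := {fsfun X -> nat with 0%N}.
HB.instance Definition _ (X : choiceType) := Choice.on (cmeas X).
HB.instance Definition _ (X : choiceType) :=
  isPointed.Build (cmeas X) ([fsfun] : {fsfun X -> nat with 0%N}).

Definition cm_eval (X : choiceType) (mu : cmeas X) (B : set X) : nat :=
  (\sum_(x <- finsupp mu | x \in B) mu x)%N.

Definition cm_le (X : topologicalType) (eta mu : cmeas X) : Prop :=
  forall B : set X, borel_set B -> (cm_eval eta B <= cm_eval mu B)%N.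

Definition Mf_gen (X : topologicalType) : set (set (cmeas X)) :=
  [set S | exists (B : set X) (A : set nat),
     borel_set B /\ S = (fun mu : cmeas X => cm_eval mu B) @^-1` A].

Definition Mf (X : topologicalType) := g_sigma_algebraType (@Mf_gen X).

Definition thinning_kernel (R : realType) (X : topologicalType)
    (T : R.-pker (Mf X) ~> (Mf X)) : Prop :=
  forall mu : Mf X, T mu [set eta : Mf X | cm_le eta mu] = 1%E.

Definition thinning_of (R : realType) (X : topologicalType)
    (P : probability (Mf X) R) (T : R.-pker (Mf X) ~> (Mf X))
    (P' : probability (Mf X) R) : Prop :=
  forall A : set (Mf X), measurable A -> P' A = (\int[P]_mu T mu A)%E.

Definition condensation_kernel (R : realType) (X : topologicalType)
    (P : probability (Mf X) R) (T : R.-pker (Mf X) ~> (Mf X))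
    (P' : probability (Mf X) R) (Q : R.-pker (Mf X) ~> (Mf X)) : Prop :=
  (forall eta : Mf X, Q eta [set mu : Mf X | cm_le eta mu] = 1%E) /\
  (forall g : (Mf X * Mf X)%type -> \bar R,
     (forall z, 0 <= g z)%E -> measurable_fun [set: (Mf X * Mf X)%type] g ->
     (\int[P]_mu \int[T mu]_eta g (eta, mu) =
      \int[P']_eta \int[Q eta]_mu g (eta, mu))%E).

(* Main.v *)
Require Import Defs.
From HB Require Import structures.
From mathcomp Require Import all_boot all_order all_algebra finmap.
From mathcomp Require Import all_classical all_reals all_analysis measurable_realfun.
From mathcomp Require Import lra.
Import Order.TTheory GRing.Theory Num.Theory.
Local Open Scope classical_set_scope.
Local Open Scope ring_scope.

Lemma natinv (R : realType) (e : R) : 0 < e -> exists N : nat, N.+1%:R^-1 < e.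
Proof.
move=> e0.
have [N _ hN] := near_infty_natSinv_lt (PosNum e0).
by exists N; apply: hN => /=.
Qed.

Lemma cm_eval_single (X : topologicalType) (a : cmeas X) (B : set X) (x : X) :
  (forall y, y \in finsupp a -> B y -> y = x) -> B x -> cm_eval a B = a x.
Proof.
move=> hB Bx; rewrite /cm_eval big_seq_cond.
rewrite (eq_bigl (fun y => (y \in finsupp a) && (y == x))); last first.
  move=> y; apply/idP/idP => /andP[ys yB].
    by rewrite ys /=; apply/eqP; apply: hB => //; rewrite inE in yB.
  by rewrite ys /= (eqP yB) inE.
have [xs|xs] := boolP (x \in finsupp a).
  rewrite -big_seq_cond -big_filter filter_pred1_uniq //.
  by rewrite big_seq1.
rewrite big1; first by rewrite fsfun_dflt.
by move=> y /andP[ys /eqP yx]; move: xs; rewrite -yx ys.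
Qed.

Section Sep.
Variables (R : realType) (X : topologicalType) (d : X -> X -> R).
Hypotheses (d0 : forall x y, 0 <= d x y) (dE : forall x y, d x y = 0 <-> x = y)
  (dC : forall x y, d x y = d y x) (dT : forall x y z, d x z <= d x y + d y z)
  (dO : forall A : set X, open A <->
       (forall x, A x -> exists2 e : R, 0 < e & [set y | d x y < e] `<=` A)).
Variables (D0 : set X) (f : X -> nat) (finj : {in D0 &, injective f})
  (D0d : closure D0 = [set: X]).

Definition Bset (i j : nat) : set X :=
  [set y | exists c, [/\ D0 c, f c = i & d c y < j.+1%:R^-1]].

Lemma ball_open c r : open [set y | d c y < r].
Proof.
apply/dO => y /= hy; exists (r - d c y); first by rewrite subr_gt0.
by move=> z /= hz; have := dT c y z; lra.
Qed.

Lemma Bset_open i j : open (Bset i j).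
Proof.
apply/dO => y [c [Dc fc hc]]; exists (j.+1%:R^-1 - d c y); first by rewrite subr_gt0.
move=> z /= hz; exists c; split => //; have := dT c y z; set r := (j.+1%:R^-1 : R) in hz *; clearbody r; lra.
Qed.

Lemma Bset_borel i j : borel_set (Bset i j).
Proof. by apply: sub_sigma_algebra; exact: Bset_open. Qed.

Lemma sep_eps (x : X) (s : seq X) : exists2 e : R, 0 < e &
  forall y, y \in s -> y != x -> e < d x y.
Proof.
elim: s => [|y s [e e0 he]]; first by exists 1 => //.
have [->|yx] := eqVneq y x.
  by exists e => // z; rewrite inE => /orP[/eqP->|/he]; [rewrite eqxx|].
have dxy : 0 < d x y.
  rewrite lt_neqAle d0 andbT; apply/eqP => /esym /dE xy.
  by move: yx; rewrite xy eqxx.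
exists (Num.min e (d x y / 2)); first by rewrite lt_min e0 divr_gt0.
move=> z; rewrite inE => /orP[/eqP->|zs] zx.
  rewrite gt_min; apply/orP; right; lra.
by rewrite gt_min (he z zs zx).
Qed.

Lemma sep (a b : cmeas X) :
  (forall i j, cm_eval a (Bset i j) = cm_eval b (Bset i j)) -> a = b.
Proof.
move=> h; apply/fsfunP => x.
have [e e0 he] := sep_eps x (finsupp a ++ finsupp b).
have e2 : 0 < e / 2 by lra.
have [N hN] := @natinv _ (e / 2) e2.
set r := N.+1%:R^-1 : R.
have r0 : 0 < r by rewrite /r invr_gt0 ltr0n.
have : closure D0 x by rewrite D0d.
move=> /(_ [set y | d x y < r]) [].
  apply: open_nbhs_nbhs; split; first exact: ball_open.
  by rewrite /= (proj2 (dE x x) erefl).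
move=> c [Dc /= xc].
have Bx : Bset (f c) N x by exists c; split => //; rewrite dC.
have key (a' : cmeas X) : (forall y, y \in finsupp a' -> y \in finsupp a ++ finsupp b) ->
    cm_eval a' (Bset (f c) N) = a' x.
  move=> sub; apply: cm_eval_single => // y ys [c' [Dc' fc' hc']].
  have cc' : c' = c by apply: finj; rewrite ?inE.
  rewrite cc' in hc'.
  apply/eqP; apply/negPn/negP => yx.
  have hc2 : d c y < r := hc'. have hN2 : r < e / 2 := hN.
  move: hc2 xc hN2 (he y (sub y ys) yx) (dT x c y); clearbody r; lra.
rewrite -(key a) -?(key b) ?h // => y ys; rewrite mem_cat ys ?orbT //.
Qed.

End Sep.
Lemma Mf_pre (X : topologicalType) (B : set X) (k : nat) : borel_set B ->
  measurable ((fun mu : Mf X => cm_eval mu B) @^-1` [set k]).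
Proof.
move=> hB; apply: sub_sigma_algebra; exists B, [set k]; split => //.
Qed.

Lemma eqeval_meas (X : topologicalType) (B : set X) : borel_set B ->
  measurable [set z : Mf X * Mf X | cm_eval z.1 B = cm_eval z.2 B].
Proof.
move=> hB.
have -> : [set z : Mf X * Mf X | cm_eval z.1 B = cm_eval z.2 B] =
  \bigcup_k (((fun mu : Mf X => cm_eval mu B) @^-1` [set k]) `*`
             ((fun mu : Mf X => cm_eval mu B) @^-1` [set k])).
  apply/seteqP; split => [z /= h|z [k _ [/= h1 h2]]].
    by exists (cm_eval z.1 B) => //; split => //=.
  by rewrite h1 h2.
by apply: bigcupT_measurable => k; apply: measurableX; apply: Mf_pre.
Qed.

Lemma diag_meas (R : realType) (X : topologicalType) : polish R X ->
  measurable [set z : Mf X * Mf X | z.1 = z.2].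
Proof.
move=> [[D0 [cD0 D0d]] [d [d0 [dE [dC [dT [dO _]]]]]]].
have [f finj] := countable_injP _ cD0.
have -> : [set z : Mf X * Mf X | z.1 = z.2] =
  \bigcap_i \bigcap_j [set z : Mf X * Mf X |
     cm_eval z.1 (@Bset R X d D0 f i j) = cm_eval z.2 (@Bset R X d D0 f i j)].
  apply/seteqP; split => [z /= h i _ j _|z /= h]; first by rewrite /= h.
  apply: (@sep R X d d0 dE dC dT dO D0 f finj D0d) => i j.
  exact: (h i I j I).
apply: bigcapT_measurable => i; apply: bigcapT_measurable => j.
apply: eqeval_meas; exact: Bset_borel.
Qed.
Section kpre.
Context d1 d2 d3 (W : measurableType d1) (Y : measurableType d2)
  (Z : measurableType d3) (R : realType) (k : R.-pker Y ~> Z) (p : W -> Y)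
  (mp : measurable_fun setT p).
Definition kpre (mp' : measurable_fun setT p) (w : W) : {measure set Z -> \bar R} := k (p w).
Let mk U : measurable U -> measurable_fun setT (kpre mp ^~ U).
Proof. by move=> mU; exact: measurableT_comp (measurable_kernel k U mU) mp. Qed.
HB.instance Definition _ := isKernel.Build _ _ _ _ _ (kpre mp) mk.
Let pk x : kpre mp x setT = 1%E.
Proof. exact: prob_kernel. Qed.
HB.instance Definition _ := Kernel_isProbability.Build _ _ _ _ _ (kpre mp) pk.
End kpre.

Section kT.
Context d2 d3 (Y : measurableType d2) (Z : measurableType d3) (R : realType)
  (k : R.-pker Y ~> Z) (y : Y).
Definition kT : set Z -> \bar R := k y.
HB.instance Definition _ := Measure.on kT.
Let pkT : kT setT = 1%E.
Proof. exact: prob_kernel. Qed.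
HB.instance Definition _ := Measure_isProbability.Build _ _ _ kT pkT.
End kT.

Lemma mint d1 d2 d3 (W : measurableType d1) (Y : measurableType d2)
  (Z : measurableType d3) (R : realType) (k : R.-pker Y ~> Z) (p : W -> Y)
  (mp : measurable_fun setT p) (h : W * Z -> \bar R) :
  (forall z, 0 <= h z)%E -> measurable_fun setT h ->
  measurable_fun setT (fun w => \int[k (p w)]_z h (w, z))%E.
Proof.
move=> h0 mh.
have := measurable_fun_integral_finite_kernel h (@kpre _ _ _ _ _ _ _ k p mp) h0 mh.
by [].
Qed.

Lemma fubk d1 d2 d3 d4 (Y1 : measurableType d1) (Z1 : measurableType d2)
  (Y2 : measurableType d3) (Z2 : measurableType d4) (R : realType)
  (k1 : R.-pker Y1 ~> Z1) (k2 : R.-pker Y2 ~> Z2) y1 y2 (f : Z1 * Z2 -> \bar R) :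
  measurable_fun setT f -> (forall z, 0 <= f z)%E ->
  (\int[k1 y1]_x \int[k2 y2]_y f (x, y) = \int[k2 y2]_y \int[k1 y1]_x f (x, y))%E.
Proof.
move=> mf f0.
exact: (@fubini_tonelli _ _ _ _ R (@kT _ _ _ _ _ k1 y1) (@kT _ _ _ _ _ k2 y2) f mf f0).
Qed.

Lemma mcomp d1 d2 d3 (T1 : measurableType d1) (T2 : measurableType d2)
  (T3 : measurableType d3) (f : T2 -> T3) (g : T1 -> T2) :
  measurable_fun setT f -> measurable_fun setT g ->
  measurable_fun setT (fun x => f (g x)).
Proof. by move=> mf mg; exact: measurableT_comp mf mg. Qed.
Arguments mcomp {d1 d2 d3 T1 T2 T3 f g}.

Ltac mtac := repeat first [ exact: measurable_cst | exact: measurable_id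
  | exact: measurable_fst | exact: measurable_snd
  | apply: measurable_fun_pair
  | apply: (mcomp measurable_fst) | apply: (mcomp measurable_snd) ].

Section Main.
Variables (R : realType) (X : topologicalType).
Variables (P P' : probability (Mf X) R) (T Q : R.-pker (Mf X) ~> (Mf X)).
Hypothesis hD : measurable [set z : Mf X * Mf X | z.1 = z.2].
Hypothesis C : forall g : (Mf X * Mf X)%type -> \bar R,
     (forall z, 0 <= g z)%E -> measurable_fun [set: (Mf X * Mf X)%type] g ->
     (\int[P]_mu \int[T mu]_eta g (eta, mu) =
      \int[P']_eta \int[Q eta]_mu g (eta, mu))%E.

Local Notation M := (Mf X).

Lemma lemA (F : M * M * M * M -> \bar R) :
  (forall z, 0 <= F z)%E -> measurable_fun setT F ->
  (\int[P']_k \int[Q k]_m \int[T m]_l \int[Q l]_n F (k, m, l, n) =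
   \int[P']_l \int[Q l]_m \int[Q l]_n \int[T m]_k F (k, m, l, n))%E.
Proof.
move=> F0 mF.
pose G1 := fun z : M * M * M => (\int[Q z.2]_n F (z, n))%E.
have G10 z : (0 <= G1 z)%E by apply: integral_ge0 => n _.
have mG1 : measurable_fun setT G1.
  exact: (@mint _ _ _ _ _ _ R Q snd measurable_snd F F0 mF).
pose H1 := fun z : M * M => (\int[T z.2]_l G1 (z, l))%E.
have H10 z : (0 <= H1 z)%E by apply: integral_ge0 => n _.
have mH1 : measurable_fun setT H1.
  exact: (@mint _ _ _ _ _ _ R T snd measurable_snd G1 G10 mG1).
pose H2 := fun z : M * M => (\int[T z.2]_k G1 ((k, z.2), z.1))%E.
have H20 z : (0 <= H2 z)%E by apply: integral_ge0 => n _.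
have mH2 : measurable_fun setT H2.
  apply: (@mint _ _ _ _ _ _ R T snd measurable_snd
    (fun w : M * M * M => G1 ((w.2, w.1.2), w.1.1))) => //.
  by apply: mcomp mG1 _; mtac.
transitivity (\int[P']_k \int[Q k]_m H1 (k, m))%E; first by [].
rewrite -(C H1 H10 mH1).
transitivity (\int[P]_m \int[T m]_l H2 (l, m))%E.
  apply: eq_integral => m _.
  rewrite /H1 /H2 /=.
  apply: (@fubk _ _ _ _ _ _ _ _ R T T m m (fun kl => G1 ((kl.1, m), kl.2))) => //.
  by apply: mcomp mG1 _; mtac.
rewrite (C H2 H20 mH2).
apply: eq_integral => l _; apply: eq_integral => m _.
rewrite /H2 /G1 /=.
apply: (@fubk _ _ _ _ _ _ _ _ R T Q m l (fun kn => F (((kn.1, m), l), kn.2))) => //.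
by apply: mcomp mF _; mtac.
Qed.

Local Notation Dg := [set z : M * M | z.1 = z.2].

Lemma inDg (k k' : M) : ((k, k') \in Dg) = (k == k').
Proof. by apply/idP/eqP; rewrite inE /=. Qed.

Lemma msing (k : M) : measurable [set k].
Proof.
have -> : [set k] = xsection Dg k.
  by apply/seteqP; split => y; rewrite /xsection /= ?inE /= => ->.
exact: measurable_xsection.
Qed.

Lemma Kint (m k : M) : T m [set k] = (\int[T m]_k' (\1_Dg (k, k'))%:E)%E.
Proof.
transitivity (\int[T m]_k' (\1_[set k] k')%:E)%E.
  by rewrite integral_indic ?setIT //; exact: msing.
by apply: eq_integral => k' _; rewrite !indicE inDg in_set1 eq_sym.
Qed.

Lemma Kint' (m k' : M) : T m [set k'] = (\int[T m]_k (\1_Dg (k, k'))%:E)%E.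
Proof.
transitivity (\int[T m]_k (\1_[set k'] k)%:E)%E.
  by rewrite integral_indic ?setIT //; exact: msing.
by apply: eq_integral => k _; rewrite !indicE inDg in_set1.
Qed.

Lemma mind : measurable_fun setT (fun z : M * M => (\1_Dg z)%:E : \bar R).
Proof. by apply/measurable_EFinP; exact: measurable_indic. Qed.

Lemma mK : measurable_fun setT (fun z : M * M => T z.2 [set z.1]).
Proof.
have -> : (fun z : M * M => T z.2 [set z.1]) =
    (fun z => \int[T z.2]_k' (\1_Dg (z.1, k'))%:E)%E.
  by apply/funext => z; rewrite Kint.
apply: (@mint _ _ _ _ _ _ R T snd measurable_snd
   (fun w : M * M * M => (\1_Dg (w.1.1, w.2))%:E)) => //.
  by apply: (mcomp mind); mtac.
Qed.

Lemma lemB (m n : M) (f : M -> R) : (forall k, 0 <= f k) -> measurable_fun setT f ->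
  (\int[T m]_k ((f k)%:E * T n [set k]) = \int[T n]_k ((f k)%:E * T m [set k]))%E.
Proof.
move=> f0 mf.
have mfi : measurable_fun setT (fun z : M * M => ((f z.1 * \1_Dg z)%:E : \bar R)).
  apply/measurable_EFinP; apply: measurable_funM; last exact: measurable_indic.
  exact: (mcomp mf measurable_fst).
transitivity (\int[T m]_k \int[T n]_k' ((f k * \1_Dg (k, k'))%:E))%E.
  apply: eq_integral => k _; rewrite Kint -ge0_integralZl //;
  first [by apply: (mcomp mind); mtac | by move=> z _; rewrite lee_fin indicE
             | by rewrite lee_fin f0].
rewrite (@fubk _ _ _ _ _ _ _ _ R T T m n (fun z => (f z.1 * \1_Dg z)%:E)) //; last first.
  by move=> z; rewrite lee_fin mulr_ge0 // indicE.
apply: eq_integral => k' _; rewrite Kint' -ge0_integralZl //.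
all: first [by apply: (mcomp mind); mtac | by move=> z _; rewrite lee_fin indicE
           | by rewrite lee_fin f0 | idtac].
apply: eq_integral => k _; rewrite -EFinM !indicE inDg.
by case: eqP => [->|]; rewrite ?mulr0.
Qed.

End Main.

Theorem mainTheorem8 (R : realType) (X : topologicalType)
    (P : probability (Mf X) R) (T : R.-pker (Mf X) ~> (Mf X))
    (P' : probability (Mf X) R) (Q : R.-pker (Mf X) ~> (Mf X)) :
  polish R X ->
  thinning_kernel T ->
  thinning_of P T P' ->
  condensation_kernel P T P' Q ->
  forall g : (Mf X * Mf X * Mf X * Mf X)%type -> R,
    (forall z, 0 <= g z) ->
    measurable_fun [set: (Mf X * Mf X * Mf X * Mf X)%type] g ->
    (\int[P']_kappa \int[Q kappa]_mu \int[T mu]_lambda \int[Q lambda]_nu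
        ((g (kappa, mu, lambda, nu))%:E * T nu [set kappa]) =
     \int[P']_kappa \int[Q kappa]_nu \int[T nu]_lambda \int[Q lambda]_mu
        ((g (kappa, mu, lambda, nu))%:E * T mu [set kappa]))%E.
Proof.
move=> hp _ _ [_ C] g g0 mg.
have hD := @diag_meas R X hp.
have mK' := mK R X T hD.
pose F1 := fun z : Mf X * Mf X * Mf X * Mf X =>
  ((g z)%:E * T z.2 [set z.1.1.1])%E.
have F10 z : (0 <= F1 z)%E by apply: mule_ge0; rewrite ?lee_fin ?g0.
have mF1 : measurable_fun setT F1.
  apply: emeasurable_funM; first exact/measurable_EFinP.
  by apply: (mcomp (g := fun z : Mf X * Mf X * Mf X * Mf X => (z.1.1.1, z.2)) mK'); mtac.
pose F2 := fun z : Mf X * Mf X * Mf X * Mf X =>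
  ((g (((z.1.1.1, z.2), z.1.2), z.1.1.2))%:E * T z.2 [set z.1.1.1])%E.
have F20 z : (0 <= F2 z)%E by apply: mule_ge0; rewrite ?lee_fin ?g0.
have mF2 : measurable_fun setT F2.
  apply: emeasurable_funM.
    by apply/measurable_EFinP; apply: (mcomp (g := fun z : Mf X * Mf X * Mf X * Mf X =>
      (((z.1.1.1, z.2), z.1.2), z.1.1.2)) mg); mtac.
  by apply: (mcomp (g := fun z : Mf X * Mf X * Mf X * Mf X => (z.1.1.1, z.2)) mK'); mtac.
transitivity (\int[P']_l \int[Q l]_m \int[Q l]_n \int[T m]_k F1 (k, m, l, n))%E.
  exact: (@lemA R X P P' T Q C F1 F10 mF1).
transitivity (\int[P']_l \int[Q l]_n \int[Q l]_m \int[T n]_k F2 (k, n, l, m))%E;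
  last by symmetry; exact: (@lemA R X P P' T Q C F2 F20 mF2).
apply: eq_integral => l _.
rewrite (@fubk _ _ _ _ _ _ _ _ R Q Q l l
  (fun mn => \int[T mn.1]_k F1 (k, mn.1, l, mn.2))%E); last first.
- by move=> z; apply: integral_ge0.
- apply: (@mint _ _ _ _ _ _ R T fst measurable_fst
    (fun p : Mf X * Mf X * Mf X => F1 (((p.2, p.1.1), l), p.1.2))) => //.
  by apply: (mcomp (g := fun p : Mf X * Mf X * Mf X => (((p.2, p.1.1), l), p.1.2)) mF1); mtac.
apply: eq_integral => n _; apply: eq_integral => m _.
apply: (@lemB R X T hD m n (fun k => g (((k, m), l), n))) => //.
by apply: (mcomp (g := fun k : Mf X => (((k, m), l), n)) mg); mtac.
Qed.
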